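(* Let $1\le k\le n$ and let $\mu\in\mathrm{TSpGr}_p(k,2n)$ be a valuated matroid in the tropical symplectic Grassmannian. Then the tropical linear space $L_\mu$ is isotropic.
   Context: $[2n]=\{1,\dots,n,\bar1,\dots,\bar n\}$ with $\bar{\bar i}=i$. $\mathbb{T}=\mathbb{R}\cup\{\infty\}$. For $\mu\in\mathbb{T}^{\binom{[2n]}{k}}$ (not all $\infty$, modulo adding constants) satisfying the tropical Plücker relations (valuated matroid of rank $k$), $L_\mu=\{x\in\mathbb{T}^{2n}:\forall T\in\binom{[2n]}{k+1},\ \min_{i\in T}(\mu_{T\setminus i}+x_i)\text{ attained at least twice or }\infty\}$. Points $x,y\in\mathbb{T}^{2n}$ are orthogonal if $\min_{i\in[2n]}(x_i+y_{\bar i})$ is attained at least twice; $L\subseteq\mathbb{T}^{2n}$ is isotropic if any two of its points are orthogonal. $\mathrm{TSpGr}_p(k,2n)$: for $\mathbb{K}$ algebraically closed of characteristic $p$ with non-Archimedean valuation $\mathrm{val}$, and $S_{k,2n}(\mathbb{K})$ the ideal of polynomials in the Plücker variables $X_J$, $J\in\binom{[2n]}{k}$, vanishing on Plücker vectors of $k$-dimensional subspaces isotropic for the standard symplectic form ($\omega(e_i,e_{\bar i})=1=-\omega(e_{\bar i},e_i)$, other pairings $0$), it is the set of $w\in\mathbb{TP}^{\binom{2n}{k}-1}$ such that for each $f=\sum_uc_uX^u\in S_{k,2n}(\mathbb{K})$ the minimum of $\mathrm{val}(c_u)+u\cdot w$ is attained at least twice. *)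

(* Defs.v *)
From HB Require Import structures.
From mathcomp Require Import all_boot all_order all_algebra.
From mathcomp Require Import mpoly.
From mathcomp Require Import reals constructive_ereal.

Set Implicit Arguments.
Unset Strict Implicit.
Unset Printing Implicit Defensive.

Import Order.TTheory GRing.Theory Num.Theory.
Local Open Scope ring_scope.

(* Ground set [2n] = 'I_(2*n): index i < n stands for i+1, index n+i stands
   for \bar{i+1}.  The involution i |-> \bar i. *)
Definition bar (n : nat) (i : 'I_(2 * n)) : 'I_(2 * n) :=
  insubd i (if (i < n)%N then (i + n)%N else (i - n)%N).

Definition kset (n k : nat) := {J : {set 'I_(2 * n)} | #|J| == k}.

(* Tropical numbers T = R \cup {oo} are modelled in \bar R (the value -oo is
   excluded by explicit hypotheses). *)

Definition min_twice {I : finType} {R : realType} (A : {set I}) (f : I -> \bar R)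
  : Prop :=
  exists i j, [/\ i \in A, j \in A, i != j, f i = f j &
                  forall l, l \in A -> (f i <= f l)%E].

Definition min_twice_or_inf {I : finType} {R : realType} (A : {set I})
  (f : I -> \bar R) : Prop :=
  min_twice A f \/ (forall l, l \in A -> f l = +oo%E).

Definition min_twice_seq {T : eqType} {R : realType} (s : seq T) (f : T -> \bar R)
  : Prop :=
  exists a b, [/\ a \in s, b \in s, a != b, f a = f b &
                  forall c, c \in s -> (f a <= f c)%E].

(* mu_J for an arbitrary subset J (oo if #|J| <> k; only used with #|J| = k) *)
Definition mu_ext {R : realType} (n k : nat) (mu : kset n k -> \bar R)
  (J : {set 'I_(2 * n)}) : \bar R :=
  match (insub J : option (kset n k)) with Some j => mu j | None => +oo%E end.

Definition trop_plucker {R : realType} (n k : nat) (mu : kset n k -> \bar R) : Prop :=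
  forall S T : {set 'I_(2 * n)}, #|S|.+1 = k -> #|T| = k.+1 ->
    min_twice_or_inf (T :\: S)
      (fun i => (mu_ext mu (i |: S) + mu_ext mu (T :\ i))%E).

Definition valuated_matroid {R : realType} (n k : nat) (mu : kset n k -> \bar R)
  : Prop :=
  [/\ forall J, mu J != -oo%E, exists J, mu J != +oo%E & trop_plucker mu].

Definition tpoint {R : realType} (n : nat) (x : 'I_(2 * n) -> \bar R) : Prop :=
  forall i, x i != -oo%E.

Definition Lmu {R : realType} (n k : nat) (mu : kset n k -> \bar R)
  (x : 'I_(2 * n) -> \bar R) : Prop :=
  tpoint x /\
  forall T : {set 'I_(2 * n)}, #|T| = k.+1 ->
    min_twice_or_inf T (fun i => (mu_ext mu (T :\ i) + x i)%E).

Definition orthogonal {R : realType} (n : nat) (x y : 'I_(2 * n) -> \bar R) : Prop :=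
  min_twice [set: 'I_(2 * n)] (fun i => (x i + y (bar i))%E).

Definition isotropic {R : realType} (n : nat) (L : ('I_(2 * n) -> \bar R) -> Prop)
  : Prop :=
  forall x y, L x -> L y -> orthogonal x y.

Definition is_valuation {K : fieldType} {R : realType} (v : K -> \bar R) : Prop :=
  [/\ forall x, v x != -oo%E,
      forall x, v x = +oo%E <-> x = 0,
      forall x y, v (x * y)%R = (v x + v y)%E &
      forall x y, (Order.min (v x) (v y) <= v (x + y)%R)%E].

(* K has characteristic p (p = 0 means characteristic zero) *)
Definition has_char (p : nat) (K : fieldType) : Prop :=
  if p == 0%N then [pchar K] =i pred0 else p \in [pchar K].

Definition omega {K : fieldType} (n : nat) (x y : 'rV[K]_(2 * n)) : K :=
  \sum_(i < 2 * n | (i < n)%N) (x 0 i * y 0 (bar i) - x 0 (bar i) * y 0 i).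

Definition isotropic_rows {K : fieldType} (n k : nat) (A : 'M[K]_(k, 2 * n)) : Prop :=
  forall a b : 'I_k, omega (row a A) (row b A) = 0.

(* the columns of J in increasing order *)
Definition kset_col (n k : nat) (J : kset n k) (j : 'I_k) : 'I_(2 * n) :=
  @enum_val _ (mem (val J)) (cast_ord (esym (eqP (valP J))) j).

Definition plucker {K : fieldType} (n k : nat) (A : 'M[K]_(k, 2 * n)) (J : kset n k)
  : K :=
  \det (colsub (@kset_col n k J) A).

(* the Plucker variables X_J are the variables of mpoly #|kset n k| K, the
   i-th variable being X_(enum_val i) *)
Definition pvar (n k : nat) (i : 'I_#|{: kset n k}|) : kset n k := enum_val i.

Definition plucker_poly (K : fieldType) (n k : nat) :=
  mpoly.mpoly #|{: kset n k}| K.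

Definition in_Sideal {K : fieldType} (n k : nat) (f : plucker_poly K n k) : Prop :=
  forall A : 'M[K]_(k, 2 * n), \rank A = k -> isotropic_rows A ->
    mpoly.meval (fun i => plucker A (pvar i)) f = 0.

Definition trop_vanish {K : fieldType} {R : realType} (val : K -> \bar R)
  (m : nat) (w : 'I_m -> \bar R) (f : mpoly.mpoly m K) : Prop :=
  f = 0 \/
  min_twice_seq (mpoly.msupp f)
    (fun u => (val (mpoly.mcoeff u f)
               + \sum_(i < m) (w i *+ mpoly.fun_of_multinom u i))%E).

Definition in_TSpGr {K : fieldType} {R : realType} (val : K -> \bar R)
  (n k : nat) (mu : kset n k -> \bar R) : Prop :=
  forall f : plucker_poly K n k, in_Sideal f ->
    trop_vanish val (fun i => mu (pvar i)) f.

(* Main.v *)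
Require Import Defs.
From HB Require Import structures.
From mathcomp Require Import all_boot all_order all_algebra.
From mathcomp Require Import mpoly.
From mathcomp Require Import reals constructive_ereal.
From mathcomp Require Import zify ring lra.

Set Implicit Arguments.
Unset Strict Implicit.
Unset Printing Implicit Defensive.
Import Order.TTheory GRing.Theory Num.Theory.
Local Open Scope ring_scope.

Lemma ex_min (T : finType) d (O : orderType d) (P : pred T) (f : T -> O) :
  (exists t, P t) -> exists t, P t /\ forall u, P u -> (f t <= f u)%O.
Proof.
case=> t Pt; case: (arg_minP f Pt) => u Pu H; by exists u.
Qed.

Lemma ex_maxn (T : finType) (P : pred T) (f : T -> nat) :
  (exists t, P t) -> exists t, P t /\ forall u, P u -> (f u <= f t)%N.
Proof.
case=> t Pt; case: (@arg_maxnP _ t P f Pt) => u Pu H; by exists u.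
Qed.

Lemma finE (R : realType) (e : \bar R) :
  e != -oo%E -> e != +oo%E -> exists r : R, e = r%:E.
Proof. by case: e => // r _ _; exists r. Qed.

Lemma addfinE (R : realType) (x y : \bar R) :
  x != -oo%E -> y != -oo%E -> (x + y)%E != +oo%E ->
  exists rx ry : R, x = rx%:E /\ y = ry%:E.
Proof. by case: x => [rx||]; case: y => [ry||] // _ _ _; exists rx, ry. Qed.

Lemma mu_extE (R : realType) n k (mu : kset n k -> \bar R) (J : {set 'I_(2 * n)}) (h : #|J| == k) :
  mu_ext mu J = mu (exist _ J h).
Proof. by rewrite /mu_ext insubT. Qed.

Lemma mu_ext_card (R : realType) n k (mu : kset n k -> \bar R) (J : {set 'I_(2 * n)}) :
  mu_ext mu J != +oo%E -> #|J| = k.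
Proof.
rewrite /mu_ext; case: insubP => [u /eqP h _ _ //|]; by rewrite eqxx.
Qed.

Lemma mu_ext_ninf (R : realType) n k (mu : kset n k -> \bar R) (J : {set 'I_(2 * n)}) :
  (forall J, mu J != -oo%E) -> mu_ext mu J != -oo%E.
Proof. move=> h; rewrite /mu_ext; case: insubP => // u _ _; exact: h. Qed.

Definition Xprop (R : realType) n k (mu : kset n k -> \bar R) (x : 'I_(2 * n) -> \bar R) :=
  forall T : {set 'I_(2 * n)}, #|T| = k.+1 ->
    min_twice_or_inf T (fun i => (mu_ext mu (T :\ i) + x i)%E).

Definition Zprop (R : realType) n k (mu : kset n k -> \bar R) (z : 'I_(2 * n) -> \bar R) :=
  forall U : {set 'I_(2 * n)}, (#|U|.+1 = k)%N ->
    min_twice_or_inf [set: 'I_(2 * n)] (fun i => (mu_ext mu (i |: U) + z i)%E).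

Lemma min_twice_other (I : finType) (R : realType) (A : {set I}) (f : I -> \bar R) a :
  min_twice A f -> exists c, [/\ c \in A, c != a & forall l, l \in A -> (f c <= f l)%E].
Proof.
case=> i [j [iA jA ij fij fmin]].
case: (eqVneq i a) => [ia|ia]; last by exists i.
exists j; split => //; first by rewrite -ia eq_sym.
by move=> l lA; rewrite -fij; apply: fmin.
Qed.

Lemma sum_setU1 (T : finType) (R : realType) (g : T -> R) (a : T) (X : {set T}) :
  a \notin X -> \sum_(i in a |: X) g i = g a + \sum_(i in X) g i.
Proof. move=> aX; exact: big_setU1. Qed.

Lemma sumn_setU1 (T : finType) (g : T -> nat) (a : T) (X : {set T}) :
  a \notin X -> (\sum_(i in a |: X) g i = g a + \sum_(i in X) g i)%N.
Proof. move=> aX; exact: big_setU1. Qed.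

Lemma bar_val n (i : 'I_(2 * n)) :
  val (bar i) = (if (i < n)%N then (i + n)%N else (i - n)%N).
Proof.
rewrite /bar val_insubd; have := ltn_ord i; case: ifP => // H hi.
exfalso; move: H; case: ifP => H2 /negbT; lia.
Qed.

Lemma barK n : involutive (@bar n).
Proof.
move=> i; apply: val_inj; rewrite !bar_val -[val i]/(nat_of_ord i); have := ltn_ord i.
case: (ltnP i n) => H hi.
  have -> : (i + n < n)%N = false by lia.
  lia.
have -> : (i - n < n)%N = true by lia.
lia.
Qed.

Lemma bar_neq n (i : 'I_(2 * n)) : bar i != i.
Proof.
apply/eqP => /(congr1 val); rewrite bar_val; case: i => i hi /=.
case: (ltnP i n) => H; lia.
Qed.

Lemma bar_inj n : injective (@bar n).
Proof. exact: can_inj (@barK n). Qed.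

Lemma setU1_in (T : finType) (a : T) (A : {set T}) : a \in A -> a |: A = A.
Proof. by move=> aA; apply/setP => i; rewrite !inE; case: eqVneq => // ->. Qed.

Lemma setD1U1 (T : finType) (a c : T) (B : {set T}) : c != a ->
  (a |: B) :\ c = a |: (B :\ c).
Proof.
move=> ca; apply/setP => i; rewrite !inE.
case: (eqVneq i a) => [->|_] /=; first by rewrite eq_sym ca.
by [].
Qed.

Lemma orthoXZ (R : realType) n k (mu : kset n k -> \bar R) (x z : 'I_(2 * n) -> \bar R) :
  (0 < n)%N -> (forall J, mu J != -oo%E) -> (exists J, mu J != +oo%E) ->
  (forall i, x i != -oo%E) -> (forall i, z i != -oo%E) ->
  Xprop mu x -> Zprop mu z ->
  min_twice [set: 'I_(2 * n)] (fun i => (x i + z i)%E).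
Proof.
move=> n0 muN [J0 J0f] xN zN HX HZ.
have i0 : 'I_(2 * n) by exists 0%N; lia.
have [a [_ amin]] := ex_min (P := predT) (fun i => (x i + z i)%E) (ex_intro _ i0 isT).
case: (boolP [exists j, (j != a) && ((x j + z j)%E == (x a + z a)%E)]).
  case/existsP => j /andP [ja /eqP wja].
  exists a, j; split; rewrite ?in_setT ?(eq_sym a j) //; by move=> l _; apply: amin.
move=> Hno.
have Hlt : forall j, j != a -> (x a + z a < x j + z j)%E.
  move=> j ja; rewrite lt_neqAle amin // andbT.
  apply: contra Hno => /eqP e; apply/existsP; exists j; by rewrite ja e eqxx.
have wafin : (x a + z a)%E != +oo%E.
  apply/negP => /eqP wa; have := Hlt (bar a) (bar_neq a); rewrite wa.
  by rewrite ltNge leey.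
have [xa [za [exa eza]]] := addfinE (xN a) (zN a) wafin.
pose P := fun B : {set 'I_(2 * n)} => (#|B| == k) && (mu_ext mu B != +oo%E).
pose cnt := fun B : {set 'I_(2 * n)} => (\sum_(i in B) (z i != +oo%E))%N.
pose r := fun B : {set 'I_(2 * n)} => fine (mu_ext mu B) + \sum_(i in B) fine (z i).
have PB0 : P (val J0) by rewrite /P (valP J0) /mu_ext valK.
have [B1 [PB1 maxB1]] := ex_maxn cnt (ex_intro P _ PB0).
pose Q := fun B => P B && (cnt B == cnt B1).
have QB1 : Q B1 by rewrite /Q PB1 eqxx.
have [B [QB minB]] := ex_min (P := Q) r (ex_intro _ B1 QB1).
pose good := fun B => Q B /\ forall B', Q B' -> r B <= r B'.
have step1 : forall B, good B -> forall b, b \in B -> z b != +oo%E ->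
    exists c, [/\ c \notin B, z c != +oo%E & good (c |: (B :\ b))].
  move=> {minB QB}B [QB minB] b bB zb.
  case/andP: QB => /andP [/eqP cB mB] /eqP ccnt.
  have cU : (#|B :\ b|.+1 = k)%N by rewrite -cB (cardsD1 b B) bB add1n.
  have [mb emb] := finE (mu_ext_ninf _ muN) mB.
  have [zbr ezb] := finE (zN b) zb.
  case: (HZ _ cU) => [Hmt | Hinf]; last first.
    by have := Hinf b (in_setT b); rewrite setD1K // emb ezb.
  have [c [_ cb cmin]] := min_twice_other b Hmt.
  have := cmin b (in_setT b); rewrite setD1K // emb ezb => hc.
  have hcf : (mu_ext mu (c |: (B :\ b)) + z c)%E != +oo%E.
    by apply: contraTneq hc => ->; rewrite leye_eq.
  have [mc [zc [emc ezc]]] := addfinE (mu_ext_ninf _ muN) (zN c) hcf.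
  have cardc : #|c |: (B :\ b)| = k by apply: (mu_ext_card (mu := mu)); rewrite emc.
  have cU' : c \notin B :\ b.
    apply/negP => cin; move: cardc; rewrite (setU1_in cin) => cardc.
    by rewrite cardc in cU; exact: (n_Sn k (esym cU)).
  have cnB : c \notin B by move: cU'; rewrite in_setD1 cb.
  exists c; split => //; first by rewrite ezc.
  have cnt_eq : cnt (c |: (B :\ b)) = cnt B.
    by rewrite /cnt sumn_setU1 // [in RHS](big_setD1 b bB) /= ezc zb.
  have QB' : Q (c |: (B :\ b)) by rewrite /Q /P cardc eqxx emc /= cnt_eq ccnt eqxx.
  have r_eq : r (c |: (B :\ b)) = r B.
    apply/le_anti; rewrite minB // andbT.
    rewrite /r sum_setU1 // [in X in (_ <= X)](big_setD1 b bB) /= emc ezc emb ezb /=.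
    rewrite emc ezc -!EFinD lee_fin in hc; move: hc; clear; lra.
  split => // B'' QB''; rewrite r_eq; exact: minB.
have step2 : forall B, good B -> a \notin B -> False.
  move=> {minB QB}B [QB minB] aB.
  case/andP: QB => /andP [/eqP cB mB] /eqP ccnt.
  have [mb emb] := finE (mu_ext_ninf _ muN) mB.
  have cT : #|a |: B| = k.+1 by rewrite cardsU1 aB cB.
  case: (HX _ cT) => [Hmt | Hinf]; last first.
    by have := Hinf a (setU11 a B); rewrite setU1K // emb exa.
  have [c [cT' ca cmin]] := min_twice_other a Hmt.
  have := cmin a (setU11 a B); rewrite setU1K // emb exa => hc.
  have hcf : (mu_ext mu ((a |: B) :\ c) + x c)%E != +oo%E.
    by apply: contraTneq hc => ->; rewrite leye_eq.
  have [mc [xc [emc exc]]] := addfinE (mu_ext_ninf _ muN) (xN c) hcf.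
  have cB' : c \in B by move: cT'; rewrite in_setU1 (negbTE ca).
  rewrite setD1U1 // in emc hc.
  have aBc : a \notin B :\ c by rewrite in_setD1 negb_and aB orbT.
  have cardB' : #|a |: (B :\ c)| = k by apply: (mu_ext_card (mu := mu)); rewrite emc.
  have PB' : P (a |: (B :\ c)) by rewrite /P cardB' eqxx emc.
  have cntB' : (cnt (a |: (B :\ c)) + (z c != +oo%E) = cnt B + 1)%N.
    rewrite /cnt sumn_setU1 // (big_setD1 c cB') /= eza /=.
    move: (\sum_(i in B :\ c) _)%N => s; move: (nat_of_bool _) => t; clear; lia.
  case: (boolP (z c != +oo%E)) => zcf; last first.
    have := maxB1 _ PB'; move: cntB'; rewrite (negbTE zcf) ccnt /= addn0 => ->.
    by rewrite addn1 ltnn.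
  have [zcr ezc] := finE (zN c) zcf.
  have QB' : Q (a |: (B :\ c)).
    by rewrite /Q PB' /=; apply/eqP; move: cntB'; rewrite zcf ccnt /= => /addIn.
  have := minB _ QB'.
  rewrite /r sum_setU1 // [in X in (X <= _)](big_setD1 c cB') /= emc emb eza ezc /= => hr.
  have := Hlt c ca; rewrite exc ezc exa eza -!EFinD lte_fin => hl.
  rewrite emc exc -!EFinD lee_fin in hc.
  move: hr hl hc; clear; lra.
have aF : z a != +oo%E by rewrite eza.
case: (boolP (a \in B)) => aB; last by case: (step2 B (conj QB minB) aB).
have [c [cB _ gc]] := step1 B (conj QB minB) a aB aF.
exfalso; apply: (step2 _ gc); rewrite in_setU1 in_setD1 eqxx /= orbF.
by apply: contraNneq cB => <-.
Qed.

Lemma min_twice_ext (I : finType) (R : realType) (A : {set I}) (f g : I -> \bar R) :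
  f =1 g -> min_twice A f -> min_twice A g.
Proof.
move=> fg [i [j [iA jA ij fij fmin]]]; exists i, j; split => //.
  by rewrite -!fg.
by move=> l lA; rewrite -!fg; apply: fmin.
Qed.

Lemma min_twice_bar n (R : realType) (f : 'I_(2 * n) -> \bar R) :
  min_twice [set: 'I_(2 * n)] f -> min_twice [set: 'I_(2 * n)] (fun i => f (bar i)).
Proof.
move=> [i [j [_ _ ij fij fmin]]]; exists (bar i), (bar j); split; rewrite ?in_setT //.
- by apply: contra ij => /eqP /bar_inj ->.
- by rewrite !barK.
- by move=> l _; rewrite barK; apply: fmin; rewrite in_setT.
Qed.

Lemma isotropic_of_A (R : realType) n k (mu : kset n k -> \bar R) :
  (0 < n)%N -> (forall J, mu J != -oo%E) -> (exists J, mu J != +oo%E) ->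
  (forall U V : {set 'I_(2 * n)}, (#|U|.+1 = k)%N -> (#|V|.+1 = k)%N ->
     min_twice_or_inf [set: 'I_(2 * n)]
       (fun i => (mu_ext mu (i |: V) + mu_ext mu (bar i |: U))%E)) ->
  isotropic (Lmu mu).
Proof.
move=> n0 muN muF HA x y [xN HXx] [yN HXy].
have Zy : Zprop mu (fun i => y (bar i)).
  move=> U cU; left.
  have := @orthoXZ R n k mu y (fun i => mu_ext mu (bar i |: U)) n0 muN muF yN
    (fun i => mu_ext_ninf _ muN) HXy (fun V cV => HA U V cU cV).
  move/min_twice_bar; apply: min_twice_ext => i /=.
  by rewrite barK addeC.
exact: (@orthoXZ R n k mu x (fun i => y (bar i)) n0 muN muF xN (fun i => yN (bar i)) HXx Zy).
Qed.


Definition cmx (K : fieldType) k m (h g : 'I_k -> 'I_m) : 'M[K]_k :=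
  \matrix_(r, c) ((h c == g r)%:R).

Lemma sum_delta (K : fieldType) k m (g : 'I_k -> 'I_m) (F : 'I_k -> K) y r0 :
  injective g -> g r0 = y -> \sum_r F r * (y == g r)%:R = F r0.
Proof.
move=> ig e; rewrite (bigD1 r0) //= -e eqxx mulr1 big1 ?addr0 // => r rr0.
by rewrite (inj_eq ig) eq_sym (negbTE rr0) mulr0.
Qed.

Lemma colsub_cmx (K : fieldType) p k m (A : 'M[K]_(p, m)) (h g : 'I_k -> 'I_m) :
  injective g -> (forall c, exists r, g r = h c) ->
  colsub h A = colsub g A *m cmx K h g.
Proof.
move=> ig hg; apply/matrixP => a c; rewrite !mxE.
have [r0 e] := hg c.
under eq_bigr do rewrite !mxE.
by rewrite (sum_delta (fun r => A a (g r)) ig e) e.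
Qed.

Lemma cmx_sq (K : fieldType) k m (h g : 'I_k -> 'I_m) :
  injective g -> injective h -> (forall c, exists r, g r = h c) ->
  \det (cmx K h g) ^+ 2 = 1.
Proof.
move=> ig ih hg.
have -> : \det (cmx K h g) ^+ 2 = \det ((cmx K h g)^T *m cmx K h g).
  by rewrite det_mulmx det_tr expr2.
have -> : (cmx K h g)^T *m cmx K h g = 1%:M.
  apply/matrixP => c c'; rewrite !mxE.
  under eq_bigr do rewrite !mxE.
  have [r0 e] := hg c.
  under eq_bigr do rewrite mulrC.
  by rewrite (sum_delta (fun r => (h c' == g r)%:R) ig e) e (inj_eq ih) eq_sym.
by rewrite det1.
Qed.

Definition hcol k' m (e : 'I_k' -> 'I_m) (i : 'I_m) (j : 'I_k'.+1) : 'I_m :=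
  if unlift ord_max j is Some j' then e j' else i.

Lemma hcol_max k' m (e : 'I_k' -> 'I_m) i : hcol e i ord_max = i.
Proof. by rewrite /hcol unlift_none. Qed.

Lemma hcol_lift k' m (e : 'I_k' -> 'I_m) i j : hcol e i (lift ord_max j) = e j.
Proof. by rewrite /hcol liftK. Qed.

Lemma hcol_inj k' m (e : 'I_k' -> 'I_m) i :
  injective e -> (forall j, e j != i) -> injective (hcol e i).
Proof.
move=> ie ne j1 j2.
case: (unliftP ord_max j1) => [j1'|] ->; case: (unliftP ord_max j2) => [j2'|] ->;
  rewrite ?hcol_lift ?hcol_max //.
- by move/ie ->.
- by move=> E; have := ne j1'; rewrite E eqxx.
- by move=> E; have := ne j2'; rewrite E eqxx.
Qed.

Lemma det_hcol (K : fieldType) k' m (A : 'M[K]_(k'.+1, m)) (e : 'I_k' -> 'I_m) i i' :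
  \det (colsub (hcol e i) A) =
  \sum_r (cofactor (colsub (hcol e i') A) r ord_max) * A r i.
Proof.
rewrite (expand_det_col _ ord_max); apply: eq_bigr => r _.
rewrite mulrC !mxE hcol_max; congr (_ * _).
rewrite /cofactor; congr (_ * \det _).
by apply/matrixP => a b; rewrite !mxE !hcol_lift.
Qed.

Lemma omega_sumZl (K : fieldType) n p (c : 'I_p -> K) (u : 'I_p -> 'rV[K]_(2 * n)) y :
  omega (\sum_r c r *: u r) y = \sum_r c r * omega (u r) y.
Proof.
rewrite /omega.
under [RHS]eq_bigr do rewrite mulr_sumr.
rewrite [RHS]exchange_big /=; apply: eq_bigr => i _.
rewrite !summxE !mulr_suml -sumrB; apply: eq_bigr => r _.
by rewrite !mxE mulrBr !mulrA.
Qed.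

Lemma omega_anti (K : fieldType) n (x y : 'rV[K]_(2 * n)) : omega x y = - omega y x.
Proof.
rewrite /omega -sumrN; apply: eq_bigr => i _; rewrite opprB; congr (_ - _); exact: mulrC.
Qed.

Lemma omega_sumZ0 (K : fieldType) n k p q (A : 'M[K]_(k, 2 * n)) (c : 'I_p -> K)
  (d : 'I_q -> K) (f : 'I_p -> 'I_k) (g : 'I_q -> 'I_k) :
  isotropic_rows A ->
  omega (\sum_r c r *: row (f r) A) (\sum_s d s *: row (g s) A) = 0.
Proof.
move=> iso; rewrite omega_sumZl big1 // => r _.
rewrite omega_anti omega_sumZl big1 ?oppr0 ?mulr0 // => s _.
by rewrite iso mulr0.
Qed.

Lemma bar_lt n (i : 'I_(2 * n)) : (bar i < n)%N = ~~ (i < n)%N.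
Proof.
rewrite bar_val; case: i => i hi /=.
case: (ltnP i n) => H; apply/idP/idP; lia.
Qed.

Definition vrow (K : fieldType) k' n (A : 'M[K]_(k'.+1, 2 * n)) (e : 'I_k' -> 'I_(2 * n))
  : 'rV[K]_(2 * n) := \row_i \det (colsub (hcol e i) A).

Lemma vrow_sum (K : fieldType) k' n (A : 'M[K]_(k'.+1, 2 * n)) e i' :
  vrow A e = \sum_r (cofactor (colsub (hcol e i') A) r ord_max) *: row r A.
Proof.
apply/rowP => i; rewrite mxE summxE (det_hcol _ _ _ i'); apply: eq_bigr => r _.
by rewrite !mxE.
Qed.

Lemma omega_vrow (K : fieldType) k' n (A : 'M[K]_(k'.+1, 2 * n)) e1 e2 (i' : 'I_(2 * n)) :
  isotropic_rows A -> omega (vrow A e1) (vrow A e2) = 0.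
Proof.
move=> iso; rewrite (vrow_sum _ _ i') (vrow_sum _ _ i').
exact: (@omega_sumZ0 K n k'.+1 k'.+1 k'.+1 A _ _ id id iso).
Qed.

Lemma omega_eps (K : fieldType) n (x y : 'rV[K]_(2 * n)) :
  omega x y = \sum_(i : 'I_(2 * n)) (if (i < n)%N then 1 else -1) * (x 0 i * y 0 (bar i)).
Proof.
rewrite /omega sumrB [RHS](bigID (fun i : 'I_(2 * n) => (i < n)%N)) /=.
congr (_ + _).
  by apply: eq_bigr => i ->; rewrite mul1r.
rewrite (reindex_inj (@bar_inj n)) /= -sumrN.
apply: eq_big => i; first by rewrite bar_lt.
by move=> H; move: (H); rewrite bar_lt => /negbTE ->; rewrite barK mulN1r.
Qed.

Definition eV n k' (V : {set 'I_(2 * n)}) (hV : #|V| = k') (j : 'I_k') : 'I_(2 * n) :=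
  @enum_val _ (mem V) (cast_ord (esym hV) j).

Lemma eV_inj n k' (V : {set 'I_(2 * n)}) (hV : #|V| = k') : injective (@eV n k' V hV).
Proof. by move=> j1 j2 /enum_val_inj /cast_ord_inj. Qed.

Lemma eV_in n k' (V : {set 'I_(2 * n)}) (hV : #|V| = k') j : @eV n k' V hV j \in V.
Proof. exact: (@enum_valP _ (mem V)). Qed.

Lemma kset_col_inj n k (J : kset n k) : injective (kset_col J).
Proof. by move=> j1 j2 /enum_val_inj /cast_ord_inj. Qed.

Lemma kset_col_in n k (J : kset n k) j : kset_col J j \in val J.
Proof. exact: (@enum_valP _ (mem (val J))). Qed.

Lemma kset_col_onto n k (J : kset n k) y : y \in val J -> exists r, kset_col J r = y.
Proof.
move=> yJ; exists (cast_ord (eqP (valP J)) (enum_rank_in yJ y)).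
by rewrite /kset_col cast_ordK enum_rankK_in.
Qed.

Definition sgnJ (K : fieldType) n k' (V : {set 'I_(2 * n)}) (hV : #|V| = k')
  (i : 'I_(2 * n)) (J : kset n k'.+1) : K :=
  \det (cmx K (hcol (eV hV) i) (kset_col J)).

Lemma det_hcol_plucker (K : fieldType) n k' (V : {set 'I_(2 * n)}) (hV : #|V| = k')
  (i : 'I_(2 * n)) (J : kset n k'.+1) (A : 'M[K]_(k'.+1, 2 * n)) :
  i \notin V -> val J = i |: V ->
  \det (colsub (hcol (eV hV) i) A) = plucker A J * sgnJ K hV i J.
Proof.
move=> iV eJ.
rewrite (@colsub_cmx K k'.+1 k'.+1 (2 * n) A _ (kset_col J)) ?det_mulmx //.
  exact: kset_col_inj.
move=> c; apply: kset_col_onto; rewrite eJ.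
case: (unliftP ord_max c) => [j|] ->; rewrite ?hcol_lift ?hcol_max.
  by rewrite in_setU1 eV_in orbT.
by rewrite setU11.
Qed.

Lemma sgnJ_sq (K : fieldType) n k' (V : {set 'I_(2 * n)}) (hV : #|V| = k')
  (i : 'I_(2 * n)) (J : kset n k'.+1) :
  i \notin V -> val J = i |: V -> sgnJ K hV i J ^+ 2 = 1.
Proof.
move=> iV eJ; apply: cmx_sq.
- exact: kset_col_inj.
- apply: hcol_inj; first exact: eV_inj.
  by move=> j; apply: contraNneq iV => <-; apply: eV_in.
move=> c; apply: kset_col_onto; rewrite eJ.
case: (unliftP ord_max c) => [j|] ->; rewrite ?hcol_lift ?hcol_max.
  by rewrite in_setU1 eV_in orbT.
by rewrite setU11.
Qed.

Lemma det_hcol_in (K : fieldType) n k' (V : {set 'I_(2 * n)}) (hV : #|V| = k')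
  (i : 'I_(2 * n)) (A : 'M[K]_(k'.+1, 2 * n)) :
  i \in V -> \det (colsub (hcol (eV hV) i) A) = 0.
Proof.
move=> iV.
have [j ej] : exists j, eV hV j = i.
  exists (cast_ord hV (enum_rank_in iV i)).
  by rewrite /eV cast_ordK enum_rankK_in.
rewrite -det_tr; apply: (@determinant_alternate _ _ _ ord_max (lift ord_max j)).
  by rewrite neq_lift.
by move=> a; rewrite !mxE hcol_max hcol_lift ej.
Qed.

Lemma mnm_pair M (a b c d : 'I_M) :
  (U_(a) + U_(b))%MM = (U_(c) + U_(d))%MM -> (a = c /\ b = d) \/ (a = d /\ b = c).
Proof.
move=> E.
have Ea := congr1 (fun m : 'X_{1..M} => m a) E.
have Eb := congr1 (fun m : 'X_{1..M} => m b) E.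
rewrite /= !mnmDE !mnm1E in Ea Eb.
case: (eqVneq a c) => [ac|ac].
  left; split => //; subst c.
  by move: Eb; rewrite eqxx; case: (eqVneq a b) => //= _; case: (eqVneq d b) => //=.
right; move: Ea Eb; rewrite eqxx (eq_sym c a) (negbTE ac) /=.
case: (eqVneq d a) => [->|da] /=; last by case: (b == a).
case: (eqVneq c b) => [-> //|cb] _.
by rewrite eqxx /= addn1 add0n; case: (a == b).
Qed.

Lemma sum_enatmul2 (R : realType) M (w : 'I_M -> \bar R) (a b : 'I_M) :
  (\sum_(m < M) (w m *+ (U_(a) + U_(b))%MM m))%E = (w a + w b)%E.
Proof.
rewrite (bigD1 a) //= mnmDE !mnm1E eqxx.
under eq_bigr => m ma do rewrite mnmDE !mnm1E (eq_sym a m) (negbTE ma) add0n.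
case: (eqVneq b a) => [->|ba].
  rewrite big1 ?adde0 //= => m ma; by rewrite (eq_sym a m) (negbTE ma).
rewrite (bigD1 b) //= eqxx big1 ?adde0 //= => m /andP [_ mb].
by rewrite (eq_sym b m) (negbTE mb).
Qed.

Definition JofS n k' (d : kset n k'.+1) (V : {set 'I_(2 * n)}) (i : 'I_(2 * n))
  : kset n k'.+1 := insubd d (i |: V).

Lemma JofS_val n k' (d : kset n k'.+1) (V : {set 'I_(2 * n)}) i :
  #|V| = k' -> i \notin V -> val (JofS d V i) = i |: V.
Proof. by move=> hV iV; rewrite val_insubd cardsU1 iV hV eqxx. Qed.

Definition epsK (K : fieldType) n (i : 'I_(2 * n)) : K := if (i < n)%N then 1 else -1.

Definition fcoef (K : fieldType) n k' (d : kset n k'.+1) (U V : {set 'I_(2 * n)})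
  (hU : #|U| = k') (hV : #|V| = k') (i : 'I_(2 * n)) : K :=
  epsK K i * sgnJ K hV i (JofS d V i) * sgnJ K hU (bar i) (JofS d U (bar i)).

Definition fmono n k' (d : kset n k'.+1) (U V : {set 'I_(2 * n)}) (i : 'I_(2 * n))
  : 'X_{1..#|{: kset n k'.+1}|} :=
  (U_(enum_rank (JofS d V i)) + U_(enum_rank (JofS d U (bar i))))%MM.

Definition Iset n (U V : {set 'I_(2 * n)}) := [set i | (i \notin V) && (bar i \notin U)].

Definition fpoly (K : fieldType) n k' (d : kset n k'.+1) (U V : {set 'I_(2 * n)})
  (hU : #|U| = k') (hV : #|V| = k') : plucker_poly K n k'.+1 :=
  \sum_(i in Iset U V) fcoef K d hU hV i *: 'X_[fmono d U V i].

Lemma fpoly_ideal (K : fieldType) n k' (d : kset n k'.+1) (U V : {set 'I_(2 * n)})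
  (hU : #|U| = k') (hV : #|V| = k') (i0 : 'I_(2 * n)) :
  in_Sideal (fpoly K d hU hV).
Proof.
move=> A _ iso.
rewrite /fpoly.
transitivity (omega (vrow A (eV hV)) (vrow A (eV hU))); last exact: omega_vrow.
rewrite omega_eps (big_morph _ (mevalD _) (meval0 _)) big_mkcond /=.
apply: eq_bigr => i _.
rewrite mevalZ mpolyXD mevalM !mevalXU /pvar !enum_rankK !mxE.
case: (boolP (i \in Iset U V)) => [|iI].
  rewrite inE => /andP [iV biU].
  rewrite (det_hcol_plucker _ _ iV (JofS_val d hV iV)).
  rewrite (det_hcol_plucker _ _ biU (JofS_val d hU biU)).
  rewrite /fcoef /epsK; case: ifP => _; ring.
rewrite inE negb_and !negbK in iI.
case/orP: iI => [iV|biU].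
  by rewrite det_hcol_in // mul0r mulr0.
by rewrite (det_hcol_in _ _ biU) !mulr0.
Qed.

Lemma fpoly_coef (K : fieldType) n k' (d : kset n k'.+1) (U V : {set 'I_(2 * n)})
  (hU : #|U| = k') (hV : #|V| = k') u :
  (fpoly K d hU hV)@_u = \sum_(i in Iset U V) fcoef K d hU hV i * (fmono d U V i == u)%:R.
Proof.
rewrite /fpoly (big_morph _ (@mcoeffD _ _ u) (@mcoeff0 _ _ u)); apply: eq_bigr => i _.
by rewrite mcoeffZ mcoeffX.
Qed.

Lemma fmono_inj n k' (d : kset n k'.+1) (U V : {set 'I_(2 * n)}) i j :
  #|U| = k' -> #|V| = k' -> U != V -> i \in Iset U V -> j \in Iset U V ->
  fmono d U V i = fmono d U V j -> i = j.
Proof.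
move=> hU hV UV; rewrite !inE => /andP [iV biU] /andP [jV bjU] /mnm_pair.
have eVi := JofS_val d hV iV; have eVj := JofS_val d hV jV.
have eUi := JofS_val d hU biU; have eUj := JofS_val d hU bjU.
case=> [[/enum_rank_inj E1 _]|[/enum_rank_inj E1 /enum_rank_inj E2]].
  have := congr1 val E1; rewrite eVi eVj => E.
  have : i \in j |: V by rewrite -E setU11.
  by rewrite in_setU1 (negbTE iV) orbF => /eqP.
have F1 := congr1 val E1; have F2 := congr1 val E2.
rewrite eVi eUj in F1; rewrite eUi eVj in F2.
have : i \in bar j |: U by rewrite -F1 setU11.
rewrite in_setU1; case/orP => [/eqP ibj|iU].
  exfalso; move/negP: UV; apply; apply/eqP.
  have bji : bar j = i by rewrite ibj.
  rewrite bji in F1 bjU.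
  by rewrite -(setU1K iV) F1 setU1K.
have : i \in j |: V by rewrite -F2 in_setU1 iU orbT.
by rewrite in_setU1 (negbTE iV) orbF => /eqP.
Qed.

Lemma fcoef_sq (K : fieldType) n k' (d : kset n k'.+1) (U V : {set 'I_(2 * n)})
  (hU : #|U| = k') (hV : #|V| = k') i :
  i \in Iset U V -> fcoef K d hU hV i ^+ 2 = 1.
Proof.
rewrite inE => /andP [iV biU].
rewrite /fcoef !exprMn (sgnJ_sq K hV iV (JofS_val d hV iV)) (sgnJ_sq K hU biU (JofS_val d hU biU)).
by rewrite /epsK; case: ifP => _; rewrite ?expr1n ?sqrrN ?expr1n !mulr1.
Qed.

Lemma fpoly_coef_mono (K : fieldType) n k' (d : kset n k'.+1) (U V : {set 'I_(2 * n)})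
  (hU : #|U| = k') (hV : #|V| = k') i :
  U != V -> i \in Iset U V -> (fpoly K d hU hV)@_(fmono d U V i) = fcoef K d hU hV i.
Proof.
move=> UV iI; rewrite fpoly_coef (bigD1 i) //= eqxx mulr1 big1 ?addr0 // => j /andP [jI ji].
case: eqP => [E|_]; last by rewrite mulr0.
by move: ji; rewrite (fmono_inj hU hV UV jI iI E) eqxx.
Qed.

Lemma fpoly_supp (K : fieldType) n k' (d : kset n k'.+1) (U V : {set 'I_(2 * n)})
  (hU : #|U| = k') (hV : #|V| = k') u :
  u \in msupp (fpoly K d hU hV) -> exists2 i, i \in Iset U V & u = fmono d U V i.
Proof.
rewrite mcoeff_msupp fpoly_coef => H.
case: (boolP [exists i, (i \in Iset U V) && (fmono d U V i == u)]).
  by case/existsP => i /andP [iI /eqP <-]; exists i.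
move=> Hn; move: H; rewrite big1 ?eqxx // => i iI.
case: eqP => [E|_]; last by rewrite mulr0.
by move: Hn; apply: contraNeq => _; apply/existsP; exists i; rewrite iI E eqxx.
Qed.

Lemma val_sq1 (K : fieldType) (R : realType) (val : K -> \bar R) (c : K) :
  is_valuation val -> c ^+ 2 = 1 -> val c = 0%E.
Proof.
case=> vN vinf vM _ c2.
have v1 : val 1 = 0%E.
  have := vM 1 1; rewrite mulr1.
  have : val 1 != +oo%E by apply/eqP => /vinf /eqP; rewrite oner_eq0.
  have := vN 1; case: (val 1) => // r _ _ /eqP; rewrite -EFinD eqe => /eqP E.
  by congr (_%:E); move: E; clear; lra.
have := vM c c; rewrite -expr2 c2 v1.
have : val c != +oo%E.
  apply/eqP => /vinf c0; move: c2; rewrite c0 expr2 mulr0 => /eqP; by rewrite eq_sym oner_eq0.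
have := vN c; case: (val c) => // r _ _ /eqP; rewrite -EFinD eqe => /eqP E.
congr (_%:E); move: E; clear; lra.
Qed.

Lemma mu_ext_oo (R : realType) n k (mu : kset n k -> \bar R) (J : {set 'I_(2 * n)}) :
  #|J| != k -> mu_ext mu J = +oo%E.
Proof. by move=> h; rewrite /mu_ext insubF //; apply/negbTE. Qed.

Lemma fpoly_value (R : realType) (K : fieldType) n k' (val : K -> \bar R)
  (mu : kset n k'.+1 -> \bar R) (d : kset n k'.+1) (U V : {set 'I_(2 * n)})
  (hU : #|U| = k') (hV : #|V| = k') i :
  is_valuation val -> U != V -> i \in Iset U V ->
  (val ((fpoly K d hU hV)@_(fmono d U V i)) +
    \sum_(m < #|{: kset n k'.+1}|) (mu (pvar m) *+ fmono d U V i m))%E =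
  (mu_ext mu (i |: V) + mu_ext mu (bar i |: U))%E.
Proof.
move=> hv UV iI.
rewrite fpoly_coef_mono // (val_sq1 hv (fcoef_sq K d hU hV iI)) add0e.
rewrite /fmono sum_enatmul2 /pvar !enum_rankK.
move: iI; rewrite inE => /andP [iV biU].
by rewrite -(JofS_val d hV iV) -(JofS_val d hU biU) /mu_ext !valK.
Qed.

Lemma A_neq (R : realType) (K : fieldType) n k' (val : K -> \bar R)
  (mu : kset n k'.+1 -> \bar R) (d : kset n k'.+1) (U V : {set 'I_(2 * n)})
  (hU : #|U| = k') (hV : #|V| = k') (i0 : 'I_(2 * n)) :
  is_valuation val -> in_TSpGr val mu -> (forall J, mu J != -oo%E) -> U != V ->
  min_twice_or_inf [set: 'I_(2 * n)]
    (fun i => (mu_ext mu (i |: V) + mu_ext mu (bar i |: U))%E).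
Proof.
move=> hv hT muN UV.
have Hf := hT _ (@fpoly_ideal K n k' d U V hU hV i0).
have oo_out : forall l, l \notin Iset U V ->
    (mu_ext mu (l |: V) + mu_ext mu (bar l |: U))%E = +oo%E.
  move=> l; rewrite inE negb_and !negbK => /orP [lV|blU].
    rewrite (@mu_ext_oo _ _ _ _ (l |: V)) ?addye ?mu_ext_ninf //.
    by rewrite (setU1_in lV) hV; apply/eqP; exact: n_Sn.
  rewrite (@mu_ext_oo _ _ _ _ (bar l |: U)) ?addey ?mu_ext_ninf //.
  by rewrite (setU1_in blU) hU; apply/eqP; exact: n_Sn.
case: Hf => [f0 | [a [b [aS bS ab eab amin]]]].
  right => l _; case: (boolP (l \in Iset U V)) => lI; last exact: oo_out.
  exfalso; have := fpoly_coef_mono K d hU hV UV lI; rewrite f0 mcoeff0 => E.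
  by have := fcoef_sq K d hU hV lI; rewrite -E expr2 mulr0 => /eqP; rewrite eq_sym oner_eq0.
left.
have [i iI ea] := fpoly_supp (K:=K) aS; have [j jI eb] := fpoly_supp (K:=K) bS.
exists i, j; split; rewrite ?in_setT //.
- by apply: contraNneq ab => ij; rewrite ea eb ij.
- by rewrite -(@fpoly_value R K n k' val mu d U V hU hV i hv UV iI) -(@fpoly_value R K n k' val mu d U V hU hV j hv UV jI) -ea -eb.
move=> l _; rewrite -(@fpoly_value R K n k' val mu d U V hU hV i hv UV iI) -ea.
case: (boolP (l \in Iset U V)) => lI; last by rewrite oo_out // leey.
rewrite -(@fpoly_value R K n k' val mu d U V hU hV l hv UV lI); apply: amin.
by rewrite mcoeff_msupp fpoly_coef_mono //; apply/eqP => E;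
  have := fcoef_sq K d hU hV lI; rewrite E expr2 mulr0 => /eqP; rewrite eq_sym oner_eq0.
Qed.

Theorem proposition4p10 (R : realType) (p n k : nat) (K : closedFieldType)
    (val : K -> \bar R) (mu : kset n k -> \bar R) :
  (1 <= k <= n)%N ->
  has_char p K ->
  is_valuation val ->
  valuated_matroid mu ->
  in_TSpGr val mu ->
  isotropic (Lmu mu).
Proof.
move=> /andP [k1 kn] _ hv hmu hT.
have n0 : (0 < n)%N by apply: leq_trans kn.
move: mu hmu hT; case: k k1 kn => // k' _ _ mu [muN [J0 J0f] _] hT.
apply: isotropic_of_A => //; first by exists J0.
move=> U V /eqP; rewrite eqSS => /eqP hU /eqP; rewrite eqSS => /eqP hV.
have i0 : 'I_(2 * n) by exists 0%N; rewrite muln_gt0.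
case: (eqVneq U V) => [<-|UV]; last exact: (@A_neq R K n k' val mu J0 U V hU hV i0 hv hT muN UV).
left.
have [a [_ amin]] := ex_min (P := predT)
  (fun i => (mu_ext mu (i |: U) + mu_ext mu (bar i |: U))%E) (ex_intro _ i0 isT).
exists a, (bar a); split; rewrite ?in_setT //.
- by rewrite eq_sym bar_neq.
- by rewrite barK addeC.
- by move=> l _; apply: amin.
Qed.
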